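(* Let $q>1$ and $a>0$. Define the probability distribution $p^{(a)}$ on $\mathbb{Z}$ by $$p^{(a)}_k=\begin{cases}f_q(a)^{-1}\Big(1-\dfrac{k^2}{a^2}\Big)^{\frac{1}{q-1}} & \text{if } |k|<a,\\ 0&\text{otherwise,}\end{cases}\qquad f_q(a)=\sum_{k\in\mathbb{Z},\,|k|<a}\Big(1-\frac{k^2}{a^2}\Big)^{\frac{1}{q-1}}.$$ Let $\sigma^2=\sum_k k^2p^{(a)}_k$. Then $p^{(a)}$ has zero mean and maximizes the Tsallis entropy $H_q$ over all probability distributions $p$ on $\mathbb{Z}$ satisfying $\sum_k k\,p_k=0$ and $\sum_k k^2p_k=\sigma^2$.
   Context: For a probability distribution $p=(p_k)_{k\in\mathbb{Z}}$ on $\mathbb{Z}$ and $q\neq 1$, the Tsallis entropy is $H_q(p)=\frac{1}{q-1}\big(1-\sum_{k\in\mathbb{Z}}p_k^q\big)$. *)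

(* Defs.v *)
From Stdlib Require Import Reals ZArith Lra.
From Coquelicot Require Import Coquelicot.
Open Scope R_scope.

(* Real power x^y for x >= 0, with the convention 0^y = 0 (y > 0 in all uses). *)
Definition rpow (x y : R) : R :=
  if Rlt_dec 0 x then Rpower x y else 0.

(* Sums over Z: split into k >= 0 and k <= -1. *)
Definition zsummable (f : Z -> R) : Prop :=
  ex_series (fun n : nat => Rabs (f (Z.of_nat n))) /\
  ex_series (fun n : nat => Rabs (f (- Z.of_nat n - 1)%Z)).

Definition zsum (f : Z -> R) : R :=
  Series (fun n : nat => f (Z.of_nat n)) + Series (fun n : nat => f (- Z.of_nat n - 1)%Z).

Definition is_prob_Z (p : Z -> R) : Prop :=
  (forall k, 0 <= p k) /\ zsummable p /\ zsum p = 1.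

Definition tsallis (q : R) (p : Z -> R) : R :=
  (1 - zsum (fun k => rpow (p k) q)) / (q - 1).

Definition zero_mean (p : Z -> R) : Prop :=
  zsummable (fun k => IZR k * p k) /\ zsum (fun k => IZR k * p k) = 0.

Definition second_moment_eq (p : Z -> R) (s2 : R) : Prop :=
  zsummable (fun k => IZR k ^ 2 * p k) /\ zsum (fun k => IZR k ^ 2 * p k) = s2.

Definition wq (q a : R) (k : Z) : R :=
  if Rlt_dec (Rabs (IZR k)) a then rpow (1 - IZR k ^ 2 / a ^ 2) (1 / (q - 1)) else 0.

Definition fq (q a : R) : R := zsum (wq q a).

Definition p_a (q a : R) (k : Z) : R := / fq q a * wq q a k.

Definition sigma2 (q a : R) : R := zsum (fun k => IZR k ^ 2 * p_a q a k).

(* Main.v *)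
Require Import Defs.
From Stdlib Require Import Reals ZArith Lra Lia.
From Coquelicot Require Import Coquelicot.
Open Scope R_scope.

Lemma ex_series_zero : ex_series (fun _ : nat => 0).
Proof.
  eapply ex_series_ext; [| apply (ex_series_scal_l 0 (fun n => (1/2)^n)), ex_series_geom].
  - intros n; simpl. unfold scal; simpl. unfold mult; simpl. ring.
  - rewrite Rabs_right; lra.
Qed.

Lemma Series_zero : Series (fun _ : nat => 0) = 0.
Proof.
  rewrite (Series_ext _ (fun n => 0 * 0)); [|intros; ring].
  rewrite Series_scal_l; ring.
Qed.

Lemma ex_series_fin (f : nat -> R) (N : nat) :
  (forall n, (N <= n)%nat -> f n = 0) -> ex_series f.
Proof.
  intros H. apply (ex_series_incr_n f N).
  eapply ex_series_ext; [|apply ex_series_zero].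
  intros n; simpl; rewrite H; auto; lia.
Qed.

Lemma Series_nonneg (f : nat -> R) : (forall n, 0 <= f n) -> 0 <= Series f.
Proof.
  intros H.
  destruct (Classical_Prop.classic (ex_series f)) as [He|He].
  - rewrite <- Series_zero. apply Series_le; auto. intros; split; [lra|auto].
  - unfold Series.
    (* non-convergent nonneg series: Lim_seq is +oo, real part 0 *)
    assert (Hl : ex_lim_seq (sum_n f)).
    { apply ex_lim_seq_incr. intros n. rewrite sum_Sn. unfold plus; simpl. specialize (H (S n)). lra. }
    destruct (Lim_seq (sum_n f)) eqn:E; simpl; try lra.
    exfalso. apply He. exists r. unfold is_series.
    apply (Lim_seq_correct _) in Hl. rewrite E in Hl. exact Hl.
Qed.

Lemma Series_ge_term (f : nat -> R) (n : nat) :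
  (forall n, 0 <= f n) -> ex_series f -> f n <= Series f.
Proof.
  intros H He.
  rewrite (Series_incr_n f (S n)); [|lia|auto]. simpl.
  assert (0 <= Series (fun k => f (S (n + k)))) by (apply Series_nonneg; auto).
  destruct n. simpl in *. lra.
  rewrite tech5. assert (0 <= sum_f_R0 f n) by (apply cond_pos_sum; auto). lra.
Qed.

Lemma zsum_ext f g : (forall k, f k = g k) -> zsum f = zsum g.
Proof. intros H. unfold zsum. rewrite (Series_ext _ (fun n => g (Z.of_nat n))), (Series_ext (fun n => f _) (fun n => g (- Z.of_nat n - 1)%Z)); auto. Qed.

Lemma zsummable_le f g : (forall k, Rabs (f k) <= Rabs (g k)) -> zsummable g -> zsummable f.
Proof.
  intros H [H1 H2]. split.
  - apply (@ex_series_le _ R_CompleteNormedModule _ (fun n => Rabs (g (Z.of_nat n)))); [|exact H1].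
    intros n. change norm with Rabs; simpl. rewrite Rabs_Rabsolu; apply H.
  - apply (@ex_series_le _ R_CompleteNormedModule _ (fun n => Rabs (g (- Z.of_nat n - 1)%Z))); [|exact H2].
    intros n. change norm with Rabs; simpl. rewrite Rabs_Rabsolu; apply H.
Qed.

Lemma zsummable_plus f g : zsummable f -> zsummable g -> zsummable (fun k => f k + g k).
Proof.
  intros [F1 F2] [G1 G2]. split.
  - apply (@ex_series_le _ R_CompleteNormedModule _ (fun n => Rabs (f (Z.of_nat n)) + Rabs (g (Z.of_nat n)))).
    + intros n. rewrite Rabs_Rabsolu. apply Rabs_triang.
    + apply (ex_series_plus _ _ F1 G1).
  - apply (@ex_series_le _ R_CompleteNormedModule _ (fun n => Rabs (f (- Z.of_nat n - 1)%Z) + Rabs (g (- Z.of_nat n - 1)%Z))).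
    + intros n. rewrite Rabs_Rabsolu. apply Rabs_triang.
    + apply (ex_series_plus _ _ F2 G2).
Qed.

Lemma zsummable_scal c f : zsummable f -> zsummable (fun k => c * f k).
Proof.
  intros [F1 F2]. split.
  - eapply ex_series_ext; [|apply (ex_series_scal_l (Rabs c) _ F1)].
    intros n. unfold scal; simpl; unfold mult; simpl. rewrite Rabs_mult; auto.
  - eapply ex_series_ext; [|apply (ex_series_scal_l (Rabs c) _ F2)].
    intros n. unfold scal; simpl; unfold mult; simpl. rewrite Rabs_mult; auto.
Qed.

Lemma zsum_plus f g : zsummable f -> zsummable g -> zsum (fun k => f k + g k) = zsum f + zsum g.
Proof.
  intros [F1 F2] [G1 G2]. unfold zsum.
  rewrite !Series_plus; try (apply ex_series_Rabs; auto). ring.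
Qed.

Lemma zsum_scal c f : zsum (fun k => c * f k) = c * zsum f.
Proof. unfold zsum. rewrite !Series_scal_l. ring. Qed.

Lemma zsum_nonneg f : (forall k, 0 <= f k) -> 0 <= zsum f.
Proof.
  intros H. unfold zsum.
  assert (0 <= Series (fun n => f (Z.of_nat n))) by (apply Series_nonneg; auto).
  assert (0 <= Series (fun n => f (- Z.of_nat n - 1)%Z)) by (apply Series_nonneg; auto). lra.
Qed.

Lemma zsum_le f g : zsummable f -> zsummable g -> (forall k, f k <= g k) -> zsum f <= zsum g.
Proof.
  intros Hf Hg H.
  assert (E : zsum g = zsum f + zsum (fun k => -1 * f k + g k)).
  { rewrite zsum_plus, zsum_scal; auto; [ring|]. apply zsummable_scal; auto. }
  rewrite E. assert (0 <= zsum (fun k => -1 * f k + g k)); [|lra].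
  apply zsum_nonneg. intros k; specialize (H k); lra.
Qed.

Lemma Zcases (k : Z) : (exists n, k = Z.of_nat n) \/ (exists n, k = (- Z.of_nat n - 1)%Z).
Proof.
  destruct (Z_le_gt_dec 0 k).
  - left. exists (Z.to_nat k). lia.
  - right. exists (Z.to_nat (- k - 1)). lia.
Qed.

Lemma zsum_ge_term f k : (forall k, 0 <= f k) -> zsummable f -> f k <= zsum f.
Proof.
  intros H [F1 F2]. unfold zsum.
  assert (0 <= Series (fun n => f (Z.of_nat n))) by (apply Series_nonneg; auto).
  assert (0 <= Series (fun n => f (- Z.of_nat n - 1)%Z)) by (apply Series_nonneg; auto).
  destruct (Zcases k) as [[n ->]|[n ->]].
  - pose proof (Series_ge_term (fun n => f (Z.of_nat n)) n (fun n => H _) (ex_series_Rabs _ F1)). simpl in *. lra.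
  - pose proof (Series_ge_term (fun n => f (- Z.of_nat n - 1)%Z) n (fun n => H _) (ex_series_Rabs _ F2)). simpl in *. lra.
Qed.

Lemma zsummable_fin f (N : nat) : (forall k, (Z.of_nat N <= Z.abs k)%Z -> f k = 0) -> zsummable f.
Proof.
  intros H. split; apply (ex_series_fin _ N); intros n Hn; rewrite H; [apply Rabs_R0| |apply Rabs_R0|]; lia.
Qed.

Lemma zsum_odd f : zsummable f -> (forall k, f (- k)%Z = - f k) -> zsum f = 0.
Proof.
  intros [F1 F2] H. unfold zsum.
  rewrite Series_incr_1 by (apply ex_series_Rabs; auto).
  assert (H0 : f 0%Z = 0) by (specialize (H 0%Z); simpl in H; lra).
  simpl Z.of_nat at 1. rewrite H0.
  rewrite (Series_ext (fun n => f (- Z.of_nat n - 1)%Z) (fun n => - f (Z.of_nat (S n)))).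
  - rewrite Series_opp. ring.
  - intros n. rewrite <- H. f_equal. lia.
Qed.

Lemma rpow_nonneg x y : 0 <= rpow x y.
Proof. unfold rpow, Rpower. destruct (Rlt_dec 0 x); [left; apply exp_pos|lra]. Qed.

Lemma rpow_pos x y : 0 < x -> rpow x y = Rpower x y.
Proof. intros H. unfold rpow. destruct (Rlt_dec 0 x); [auto|lra]. Qed.

Lemma rpow_le_self x q : 1 <= q -> 0 <= x <= 1 -> rpow x q <= x.
Proof.
  intros Hq [H0 H1]. unfold rpow. destruct (Rlt_dec 0 x) as [Hx|]; [|lra].
  replace q with ((q - 1) + 1) by ring. rewrite Rpower_plus, Rpower_1 by auto.
  assert (Rpower x (q - 1) <= 1).
  { unfold Rpower.
    assert (ln x <= 0) by (rewrite <- ln_1; apply ln_le; lra).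
    assert (Hle : (q-1) * ln x <= 0) by (apply Rmult_le_0_l; lra).
    destruct (Rle_lt_or_eq_dec _ _ Hle) as [Hl|Hl].
    - pose proof (exp_increasing _ _ Hl) as He; rewrite exp_0 in He; lra.
    - rewrite Hl, exp_0; lra. }
  assert (0 < Rpower x (q-1)) by apply exp_pos. nra.
Qed.

Lemma convex_pow q x y : 1 < q -> 0 <= x -> 0 < y ->
  Rpower y q + q * Rpower y (q - 1) * (x - y) <= rpow x q.
Proof.
  intros Hq Hx Hy.
  assert (Hyq : Rpower y q = Rpower y (q - 1) * y).
  { replace q with ((q - 1) + 1) at 1 by ring. rewrite Rpower_plus, Rpower_1; auto. }
  assert (Hp : 0 < Rpower y (q-1)) by apply exp_pos.
  destruct (Rle_lt_or_eq_dec 0 x Hx) as [Hx'|Hx'].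
  - rewrite rpow_pos by auto.
    assert (Hd : forall c, y <= c <= x \/ x <= c <= y -> 0 < c ->
              derivable_pt_lim (fun t => Rpower t q) c (q * Rpower c (q - 1))).
    { intros c _ Hc. apply derivable_pt_lim_power; auto. }
    destruct (Rtotal_order x y) as [Hlt|[Heq|Hgt]].
    + destruct (MVT_cor2 (fun t => Rpower t q) (fun t => q * Rpower t (q - 1)) x y Hlt)
        as [c [Hc1 Hc2]].
      { intros c Hc. apply Hd; lra. }
      assert (Rpower c (q-1) < Rpower y (q-1)) by (apply Rlt_Rpower_l; lra).
      assert (0 <= q * ((Rpower y (q-1) - Rpower c (q-1)) * (y - x))) by
        (apply Rmult_le_pos; [lra|apply Rmult_le_pos; lra]).
      nra.
    + subst. lra.
    + destruct (MVT_cor2 (fun t => Rpower t q) (fun t => q * Rpower t (q - 1)) y x Hgt)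
        as [c [Hc1 Hc2]].
      { intros c Hc. apply Hd; lra. }
      assert (Rpower y (q-1) < Rpower c (q-1)) by (apply Rlt_Rpower_l; lra).
      assert (0 <= q * ((Rpower c (q-1) - Rpower y (q-1)) * (x - y))) by
        (apply Rmult_le_pos; [lra|apply Rmult_le_pos; lra]).
      nra.
  - subst x. unfold rpow. destruct (Rlt_dec 0 0); [lra|]. rewrite Hyq.
    assert (0 <= Rpower y (q-1) * y * (q - 1)) by (repeat apply Rmult_le_pos; lra). nra.
Qed.

Lemma wq_supp q a : exists N : nat, forall k, (Z.of_nat N <= Z.abs k)%Z -> wq q a k = 0.
Proof.
  exists (Z.to_nat (up a)). intros k Hk. unfold wq.
  destruct (Rlt_dec (Rabs (IZR k)) a) as [H|H]; auto. exfalso.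
  rewrite Rabs_Zabs in H. destruct (archimed a) as [H1 _].
  assert (IZR (up a) <= IZR (Z.abs k)) by (apply IZR_le; lia). lra.
Qed.

Lemma wq_nonneg q a k : 0 <= wq q a k.
Proof. unfold wq. destruct (Rlt_dec _ _); [apply rpow_nonneg|lra]. Qed.

Lemma wq_in q a k : 0 < a -> Rabs (IZR k) < a ->
  0 < 1 - IZR k ^ 2 / a ^ 2 /\ wq q a k = Rpower (1 - IZR k ^ 2 / a ^ 2) (1 / (q - 1)).
Proof.
  intros ha H. assert (Hu : 0 < 1 - IZR k ^ 2 / a ^ 2).
  { assert (IZR k ^ 2 < a ^ 2).
    { rewrite <- (pow2_abs (IZR k)). pose proof (Rabs_pos (IZR k)). nra. }
    assert (IZR k ^ 2 / a ^ 2 < 1); [|lra].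
    apply (Rmult_lt_reg_r (a^2)); [nra|]. unfold Rdiv. rewrite Rmult_assoc, Rinv_l; nra. }
  split; auto. unfold wq. destruct (Rlt_dec _ _); [|lra]. apply rpow_pos; auto.
Qed.

Lemma wq_out q a k : ~ Rabs (IZR k) < a -> wq q a k = 0.
Proof. intros H. unfold wq. destruct (Rlt_dec _ _); [lra|auto]. Qed.

Lemma wq_0 q a : 0 < a -> wq q a 0%Z = 1.
Proof.
  intros ha. destruct (wq_in q a 0 ha) as [_ ->]. { rewrite Rabs_R0; auto. }
  replace (1 - IZR 0 ^ 2 / a ^ 2) with 1 by (simpl; field; lra).
  unfold Rpower. rewrite ln_1, Rmult_0_r, exp_0; auto.
Qed.

Lemma wq_sym q a k : wq q a (- k)%Z = wq q a k.
Proof. unfold wq. rewrite opp_IZR, Rabs_Ropp. replace ((- IZR k) ^ 2) with (IZR k ^ 2) by ring. auto. Qed.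

Lemma fq_pos q a : 0 < a -> 1 <= fq q a.
Proof.
  intros ha. unfold fq. rewrite <- (wq_0 q a ha) at 1. apply zsum_ge_term.
  - apply wq_nonneg.
  - destruct (wq_supp q a) as [N HN]. apply (zsummable_fin _ N); auto.
Qed.

Lemma fin_mult q a (g : Z -> R) : zsummable (fun k => g k * p_a q a k).
Proof.
  destruct (wq_supp q a) as [N HN]. apply (zsummable_fin _ N). intros k Hk.
  unfold p_a. rewrite HN; auto; ring.
Qed.

Theorem theorem2 (q a : R) (hq : 1 < q) (ha : 0 < a) :
  is_prob_Z (p_a q a) /\
  zero_mean (p_a q a) /\
  second_moment_eq (p_a q a) (sigma2 q a) /\
  (forall p : Z -> R,
     is_prob_Z p -> zero_mean p -> second_moment_eq p (sigma2 q a) ->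
     tsallis q p <= tsallis q (p_a q a)).
Proof.
  pose proof (fq_pos q a ha) as Hf.
  assert (HC : 0 < / fq q a) by (apply Rinv_0_lt_compat; lra).
  assert (Hps : forall k, 0 <= p_a q a k).
  { intros k. unfold p_a. pose proof (wq_nonneg q a k). nra. }
  assert (Hsum : zsummable (p_a q a)).
  { apply (zsummable_le _ (fun k => 1 * p_a q a k)); [intros; rewrite Rmult_1_l; lra|apply fin_mult]. }
  assert (Hprob : is_prob_Z (p_a q a)).
  { split; [auto|split; auto]. unfold p_a. rewrite zsum_scal. fold (fq q a). field. lra. }
  split; [exact Hprob|]. split.
  { split; [apply fin_mult|]. apply zsum_odd; [apply fin_mult|].
    intros k. unfold p_a. rewrite wq_sym, opp_IZR. ring. }
  split. { split; [apply fin_mult|reflexivity]. }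
  intros p [Hp0 [Hp1 Hp2]] _ [Hm1 Hm2].
  set (ps := p_a q a) in *.
  set (D := Rpower (/ fq q a) (q - 1)).
  assert (HD : 0 < D) by apply exp_pos.
  set (h := fun k => rpow (ps k) q + q * D * (1 - IZR k ^ 2 / a ^ 2) * (p k - ps k)).
  assert (Hple1 : forall k, p k <= 1).
  { intros k. rewrite <- Hp2. apply zsum_ge_term; auto. }
  assert (HA : zsummable (fun k => rpow (ps k) q)).
  { destruct (wq_supp q a) as [N HN]. apply (zsummable_fin _ N). intros k Hk.
    unfold ps, p_a. rewrite HN; auto. rewrite Rmult_0_r. unfold rpow.
    destruct (Rlt_dec 0 0); [lra|auto]. }
  assert (HB : zsummable (fun k => rpow (p k) q)).
  { apply (zsummable_le _ p); auto. intros k.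
    pose proof (rpow_nonneg (p k) q). pose proof (rpow_le_self (p k) q).
    pose proof (Hp0 k); pose proof (Hple1 k).
    assert (rpow (p k) q <= p k) by (apply H0; lra).
    rewrite !Rabs_right; lra. }
  assert (Hk2 : zsummable (fun k => IZR k ^ 2 * ps k)) by apply fin_mult.
  assert (Hu : zsum (fun k => 1 * p k + -1 * ps k) = 0).
  { rewrite zsum_plus, !zsum_scal by (apply zsummable_scal; auto).
    rewrite Hp2. destruct Hprob as [_ [_ ->]]. ring. }
  assert (Hv : zsum (fun k => 1 * (IZR k ^ 2 * p k) + -1 * (IZR k ^ 2 * ps k)) = 0).
  { rewrite zsum_plus, !zsum_scal by (apply zsummable_scal; auto).
    rewrite Hm2. unfold sigma2. fold ps. ring. }
  assert (Hsu : zsummable (fun k => 1 * p k + -1 * ps k))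
    by (apply zsummable_plus; apply zsummable_scal; auto).
  assert (Hsv : zsummable (fun k => 1 * (IZR k ^ 2 * p k) + -1 * (IZR k ^ 2 * ps k)))
    by (apply zsummable_plus; apply zsummable_scal; auto).
  assert (Hh : zsum h = zsum (fun k => rpow (ps k) q)).
  { rewrite (zsum_ext h (fun k => rpow (ps k) q +
        ((q * D) * (1 * p k + -1 * ps k) +
         (- (q * D / a ^ 2)) * (1 * (IZR k ^ 2 * p k) + -1 * (IZR k ^ 2 * ps k))))).
    - rewrite zsum_plus; auto.
      2:{ apply zsummable_plus; apply zsummable_scal; auto. }
      rewrite zsum_plus by (apply zsummable_scal; auto).
      rewrite !zsum_scal, Hu, Hv. ring.
    - intros k. unfold h. field. lra. }
  assert (Hhs : zsummable h).
  { apply (zsummable_le _ (fun k => rpow (ps k) q +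
        ((q * D) * (1 * p k + -1 * ps k) +
         (- (q * D / a ^ 2)) * (1 * (IZR k ^ 2 * p k) + -1 * (IZR k ^ 2 * ps k))))).
    - intros k. unfold h. right. f_equal. field. lra.
    - apply zsummable_plus; auto. apply zsummable_plus; apply zsummable_scal; auto. }
  assert (Hle : zsum (fun k => rpow (ps k) q) <= zsum (fun k => rpow (p k) q)).
  { rewrite <- Hh. apply zsum_le; auto. intros k. unfold h.
    destruct (Rlt_dec (Rabs (IZR k)) a) as [Hk|Hk].
    - destruct (wq_in q a k ha Hk) as [Hu0 Hw].
      assert (Hpsk : ps k = / fq q a * Rpower (1 - IZR k ^ 2 / a ^ 2) (1 / (q - 1)))
        by (unfold ps, p_a; rewrite Hw; auto).
      assert (HW : 0 < Rpower (1 - IZR k ^ 2 / a ^ 2) (1 / (q - 1))) by apply exp_pos.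
      assert (Hpos : 0 < ps k) by (rewrite Hpsk; nra).
      assert (Hq1 : Rpower (ps k) (q - 1) = D * (1 - IZR k ^ 2 / a ^ 2)).
      { rewrite Hpsk, <- Rpower_mult_distr by auto. unfold D. f_equal.
        rewrite Rpower_mult. replace (1 / (q - 1) * (q - 1)) with 1 by (field; lra).
        apply Rpower_1; auto. }
      rewrite rpow_pos by auto.
      pose proof (convex_pow q (p k) (ps k) hq (Hp0 k) Hpos). rewrite Hq1 in H. lra.
    - assert (Hz : ps k = 0) by (unfold ps, p_a; rewrite wq_out; auto; ring).
      rewrite Hz. unfold rpow at 1. destruct (Rlt_dec 0 0); [lra|].
      assert (Hk3 : a ^ 2 <= IZR k ^ 2).
      { rewrite <- (pow2_abs (IZR k)). nra. }
      assert (1 <= IZR k ^ 2 / a ^ 2).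
      { apply (Rmult_le_reg_r (a^2)); [nra|]. unfold Rdiv. rewrite Rmult_assoc, Rinv_l; nra. }
      pose proof (rpow_nonneg (p k) q). pose proof (Hp0 k).
      assert (0 <= q * D * (IZR k ^ 2 / a ^ 2 - 1) * p k)
        by (repeat apply Rmult_le_pos; lra).
      nra. }
  unfold tsallis. unfold Rdiv. apply Rmult_le_compat_r.
  - left. apply Rinv_0_lt_compat. lra.
  - lra.
Qed.
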